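(* Let $\mathcal{S}\subseteq\mathcal{G}$ with $|\mathcal{S}|=H$ and $t\in[T]$. Suppose Assumptions 1 and 2 hold and $\|K^{(t)}_{k,\mathcal{S}}-\hat K^{(t)}_{k,\mathcal{S}}\|\le\varepsilon$ for all $k\in\{0,\dots,N-1\}$, where $\varepsilon>0$. Let $\zeta_{\mathcal{S}}\ge1$ and $\eta_{\mathcal{S}}\in(0,1)$ be such that $\|\Psi^{(t)}_{k_2,k_1}(\mathcal{S})\|\le\zeta_{\mathcal{S}}\eta_{\mathcal{S}}^{k_2-k_1}$ for all $0\le k_1\le k_2\le N$. If $\varepsilon\le\frac{1-\eta_{\mathcal{S}}}{2\|B_{\mathcal{S}}\|\zeta_{\mathcal{S}}}$, then for all $0\le k_1\le k_2\le N$, $$\|\hat\Psi^{(t)}_{k_2,k_1}(\mathcal{S})\|\le\zeta_{\mathcal{S}}\Big(\frac{1+\eta_{\mathcal{S}}}{2}\Big)^{k_2-k_1}.$$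
   Context: $A\in\mathbb{R}^{n\times n}$, $B=[B_1\ \cdots\ B_q]\in\mathbb{R}^{n\times m}$ with $B_i\in\mathbb{R}^{n\times m_i}$, actuator set $\mathcal{G}=\{1,\dots,q\}$, $H\ge1$ fixed; for $\mathcal{S}=\{i_1<\dots<i_H\}$, $B_{\mathcal{S}}=[B_{i_1}\ \cdots\ B_{i_H}]$. Horizon $N\ge1$, rounds $T\ge1$; for each $t\in[T]$: $Q^{(t)},Q_f^{(t)}\in\mathbb{S}^n_+$, $R^{(t)}\in\mathbb{S}^m_{++}$, $R^{(t)}_{\mathcal{S}}$ the principal submatrix for actuators in $\mathcal{S}$. Riccati recursion: $P^{(t)}_{N,\mathcal{S}}=Q_f^{(t)}$ and for $k=N-1,\dots,0$: $K^{(t)}_{k,\mathcal{S}}=-(B_{\mathcal{S}}^\top P^{(t)}_{k+1,\mathcal{S}}B_{\mathcal{S}}+R^{(t)}_{\mathcal{S}})^{-1}B_{\mathcal{S}}^\top P^{(t)}_{k+1,\mathcal{S}}A$, $P^{(t)}_{k,\mathcal{S}}=Q^{(t)}+A^\top P^{(t)}_{k+1,\mathcal{S}}A-A^\top P^{(t)}_{k+1,\mathcal{S}}B_{\mathcal{S}}(B_{\mathcal{S}}^\top P^{(t)}_{k+1,\mathcal{S}}B_{\mathcal{S}}+R^{(t)}_{\mathcal{S}})^{-1}B_{\mathcal{S}}^\top P^{(t)}_{k+1,\mathcal{S}}A$; $\hat K^{(t)}_{k,\mathcal{S}}$ are the gains from the same recursion with $(A,B_{\mathcal{S}})$ replaced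 by estimates $(\hat A,\hat B_{\mathcal{S}})$. $\Psi^{(t)}_{k_2,k_1}(\mathcal{S})=(A+B_{\mathcal{S}}K^{(t)}_{k_2-1,\mathcal{S}})\cdots(A+B_{\mathcal{S}}K^{(t)}_{k_1,\mathcal{S}})$ and $\hat\Psi^{(t)}_{k_2,k_1}(\mathcal{S})=(A+B_{\mathcal{S}}\hat K^{(t)}_{k_2-1,\mathcal{S}})\cdots(A+B_{\mathcal{S}}\hat K^{(t)}_{k_1,\mathcal{S}})$ for $k_2>k_1$, both equal to $I$ when $k_2=k_1$. Assumption 1: for all $t$, $Q_f^{(t)}\succ0$, $\sigma_n(Q^{(t)})\ge1$, $\sigma_m(R^{(t)})\ge1$. Assumption 2: there are $\ell\in\{1,\dots,n-1\}$ and $\nu>0$ with $\sigma_n([B_{\mathcal{S}}\ AB_{\mathcal{S}}\ \cdots\ A^{\ell-1}B_{\mathcal{S}}])\ge\nu$ for all $|\mathcal{S}|=H$. *)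

(* Defs.v *)
From HB Require Import structures.
From mathcomp Require Import all_boot all_order all_algebra.
From mathcomp Require Import boolp classical_sets reals.
Set Implicit Arguments. Unset Strict Implicit. Unset Printing Implicit Defensive.
Import Order.TTheory GRing.Theory Num.Theory.
Local Open Scope ring_scope.
Local Open Scope classical_set_scope.

Section Defs.
Variable R : realType.

Definition vnorm (p : nat) (x : 'cV[R]_p) : R := Num.sqrt (\sum_i (x i 0) ^+ 2).

Definition opnorm (p r : nat) (M : 'M[R]_(p, r)) : R :=
  sup [set vnorm (M *m x) | x in [set x : 'cV[R]_r | vnorm x <= 1]].

(* smallest (p-th) singular value of a p x r matrix:
   sigma_p(M) = min_{||x||=1} ||M^T x||  (x in R^p) *)
Definition sigma_min (p r : nat) (M : 'M[R]_(p, r)) : R :=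
  inf [set vnorm (M^T *m x) | x in [set x : 'cV[R]_p | vnorm x = 1]].

Definition psd (p : nat) (M : 'M[R]_p) : Prop :=
  M^T = M /\ forall x : 'cV[R]_p, 0 <= (x^T *m M *m x) 0 0.
Definition pd (p : nat) (M : 'M[R]_p) : Prop :=
  M^T = M /\ forall x : 'cV[R]_p, x != 0 -> 0 < (x^T *m M *m x) 0 0.

(* Actuators: the m columns of B are split into q contiguous, ordered blocks
   B_1 ... B_q; [act j] is the actuator owning column j ([act] nondecreasing). *)
Definition act_cols (m q : nat) (act : 'I_m -> 'I_q) (S : {set 'I_q}) : {set 'I_m} :=
  [set j | act j \in S].

(* B_S = [B_{i_1} ... B_{i_H}] : the columns of actuators in S, in order *)
Definition selB (n m q : nat) (act : 'I_m -> 'I_q) (S : {set 'I_q})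
  (B : 'M[R]_(n, m)) : 'M[R]_(n, #|act_cols act S|) :=
  colsub (fun j : 'I_#|act_cols act S| => enum_val j) B.

Definition selR (m q : nat) (act : 'I_m -> 'I_q) (S : {set 'I_q})
  (Rc : 'M[R]_m) : 'M[R]_#|act_cols act S| :=
  mxsub (fun j : 'I_#|act_cols act S| => enum_val j)
        (fun j : 'I_#|act_cols act S| => enum_val j) Rc.

Section Riccati.
Variables (n p : nat) (A : 'M[R]_n) (Bs : 'M[R]_(n, p))
          (Q Qf : 'M[R]_n) (Rs : 'M[R]_p) (N : nat).

Definition ric_step (P : 'M[R]_n) : 'M[R]_n :=
  Q + A^T *m P *m A
    - A^T *m P *m Bs *m invmx (Bs^T *m P *m Bs + Rs) *m Bs^T *m P *m A.

(* Pj j = P_{N-j} *)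
Fixpoint ric_back (j : nat) : 'M[R]_n :=
  match j with 0 => Qf | j'.+1 => ric_step (ric_back j') end.

Definition ricP (k : nat) : 'M[R]_n := ric_back (N - k).

Definition ricK (k : nat) : 'M[R]_(p, n) :=
  - (invmx (Bs^T *m ricP k.+1 *m Bs + Rs) *m Bs^T *m ricP k.+1 *m A).
End Riccati.

Fixpoint prodL (n : nat) (M : nat -> 'M[R]_n) (k1 d : nat) : 'M[R]_n :=
  match d with 0 => 1%:M | d'.+1 => M (k1 + d')%N *m prodL M k1 d' end.

(* Psi_{k2,k1} = M (k2-1) ... M k1 , = I when k2 = k1 *)
Definition Psi (n : nat) (M : nat -> 'M[R]_n) (k2 k1 : nat) : 'M[R]_n :=
  prodL M k1 (k2 - k1).

Fixpoint ctrb (n p : nat) (A : 'M[R]_n) (Bs : 'M[R]_(n, p)) (l : nat)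
  : 'M[R]_(n, l * p) :=
  match l return 'M[R]_(n, l * p) with
  | 0 => 0
  | l'.+1 => row_mx Bs (A *m ctrb A Bs l')
  end.

End Defs.

(* Main.v *)
Require Import Defs.
From HB Require Import structures.
From mathcomp Require Import all_boot all_order all_algebra.
From mathcomp Require Import boolp classical_sets reals.
From mathcomp Require Import zify ring lra.
Set Implicit Arguments. Unset Strict Implicit. Unset Printing Implicit Defensive.
Import Order.TTheory GRing.Theory Num.Theory.
Local Open Scope ring_scope.

Section VN.
Variable R : realType.

Lemma CS (p : nat) (a b : 'I_p -> R) :
  (\sum_i a i * b i) ^+ 2 <= (\sum_i a i ^+ 2) * (\sum_i b i ^+ 2).
Proof.
set Sab := \sum_i a i * b i; set Saa := \sum_i a i ^+ 2; set Sbb := \sum_i b i ^+ 2.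
have Sbb0 : 0 <= Sbb by apply: sumr_ge0 => i _; exact: sqr_ge0.
have Saa0 : 0 <= Saa by apply: sumr_ge0 => i _; exact: sqr_ge0.
have [Sbbz|Sbbp] := eqVneq Sbb 0.
  have bz : forall i, b i = 0.
    move=> i; apply/eqP; rewrite -sqrf_eq0; apply/eqP.
    move: Sbbz; rewrite /Sbb => /psumr_eq0P -> // j _; exact: sqr_ge0.
  rewrite /Sab; under eq_bigr do rewrite bz mulr0.
  by rewrite big1 // expr0n /= Sbbz mulr0.
have Sbbp' : 0 < Sbb by rewrite lt_def Sbbp Sbb0.
have H : 0 <= \sum_i (Sbb * a i - Sab * b i) ^+ 2 by apply: sumr_ge0 => i _; exact: sqr_ge0.
have E : \sum_i (Sbb * a i - Sab * b i) ^+ 2 = Sbb * (Sbb * Saa - Sab ^+ 2).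
  rewrite (eq_bigr (fun i => Sbb ^+ 2 * a i ^+ 2 - (2 * Sbb * Sab) * (a i * b i) + Sab ^+ 2 * b i ^+ 2)); last by move=> i _; ring.
  rewrite big_split sumrB /= -!mulr_sumr -/Saa -/Sab -/Sbb; ring.
rewrite E in H.
have : 0 <= Sbb * Saa - Sab ^+ 2 by rewrite -(pmulr_rge0 (Sbb * Saa - Sab ^+ 2) Sbbp').
lra.
Qed.

Lemma vnorm_ge0 p (x : 'cV[R]_p) : 0 <= vnorm x.
Proof. exact: sqrtr_ge0. Qed.

Lemma vnorm_sq p (x : 'cV[R]_p) : vnorm x ^+ 2 = \sum_i (x i 0) ^+ 2.
Proof. by rewrite /vnorm sqr_sqrtr //; apply: sumr_ge0 => i _; exact: sqr_ge0. Qed.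

Lemma vnorm0 p : vnorm (0 : 'cV[R]_p) = 0.
Proof. by rewrite /vnorm big1 ?sqrtr0 // => i _; rewrite mxE expr0n. Qed.

Lemma vnorm_eq0 p (x : 'cV[R]_p) : vnorm x = 0 -> x = 0.
Proof.
move=> h; have h2 : \sum_i (x i 0) ^+ 2 = 0 by rewrite -vnorm_sq h expr0n.
apply/matrixP => i j; rewrite (ord1 j) mxE; apply/eqP; rewrite -sqrf_eq0; apply/eqP.
by move: h2 => /psumr_eq0P -> // k _; exact: sqr_ge0.
Qed.

Lemma vnormZ p a (x : 'cV[R]_p) : vnorm (a *: x) = `|a| * vnorm x.
Proof.
rewrite /vnorm -sqrtr_sqr -sqrtrM ?sqr_ge0 // mulr_sumr; congr Num.sqrt.
by apply: eq_bigr => i _; rewrite mxE exprMn.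
Qed.

Lemma vnormN p (x : 'cV[R]_p) : vnorm (- x) = vnorm x.
Proof. by rewrite -scaleN1r vnormZ normrN normr1 mul1r. Qed.

Lemma vnormD p (x y : 'cV[R]_p) : vnorm (x + y) <= vnorm x + vnorm y.
Proof.
have Hs : \sum_i ((x + y) i 0) ^+ 2 = \sum_i (x i 0) ^+ 2 + 2 * \sum_i (x i 0 * y i 0) + \sum_i (y i 0) ^+ 2.
  rewrite mulr_sumr -!big_split /=; apply: eq_bigr => i _; rewrite mxE; ring.
have cs := @CS p (fun i => x i 0) (fun i => y i 0).
rewrite -!vnorm_sq in cs.
have hxy : \sum_i (x i 0 * y i 0) <= vnorm x * vnorm y.
  apply: le_trans (ler_norm _) _; rewrite -sqrtr_sqr.
  have -> : vnorm x * vnorm y = Num.sqrt ((vnorm x * vnorm y) ^+ 2).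
    by rewrite sqrtr_sqr ger0_norm // mulr_ge0 // vnorm_ge0.
  by rewrite ler_sqrt ?sqr_ge0 // exprMn.
rewrite -[X in _ <= X]ger0_norm ?addr_ge0 ?vnorm_ge0 // -sqrtr_sqr /vnorm ler_sqrt ?sqr_ge0 //.
rewrite Hs -/(vnorm x) -/(vnorm y) -!vnorm_sq.
have := vnorm_ge0 x; have := vnorm_ge0 y; nra.
Qed.

Lemma vnorm_entry p (x : 'cV[R]_p) i : `|x i 0| <= vnorm x.
Proof.
rewrite -sqrtr_sqr ler_sqrt; last by apply: sumr_ge0 => j _; exact: sqr_ge0.
by rewrite (bigD1 i) //= lerDl; apply: sumr_ge0 => j _; exact: sqr_ge0.
Qed.

Definition opset p r (M : 'M[R]_(p, r)) :=
  ([set vnorm (M *m x) | x in [set x : 'cV[R]_r | vnorm x <= 1]])%classic.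

Lemma sqr_le_sqr (y c : R) : `|y| <= c -> y ^+ 2 <= c ^+ 2.
Proof.
move=> h; have h0 := normr_ge0 y; rewrite -real_normK ?num_real //.
by rewrite ler_pXn2r // ?nnegrE //; apply: le_trans h.
Qed.

Lemma opbound p r (M : 'M[R]_(p, r)) (x : 'cV[R]_r) : vnorm x <= 1 ->
  vnorm (M *m x) <= Num.sqrt (\sum_(i < p) (\sum_i \sum_j `|M i j|) ^+ 2).
Proof.
move=> hx; rewrite /vnorm ler_sqrt; last by apply: sumr_ge0 => i _; exact: sqr_ge0.
apply: ler_sum => i _; apply: sqr_le_sqr; rewrite mxE.
apply: le_trans (ler_norm_sum _ _ _) _.
apply: (@le_trans _ _ (\sum_j `|M i j|)).
  apply: ler_sum => j _; rewrite normrM; rewrite -[X in _ <= X]mulr1.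
  apply: ler_wpM2l => //; exact: le_trans (vnorm_entry _ _) hx.
rewrite (bigD1 i) //= lerDl; apply: sumr_ge0 => k _; apply: sumr_ge0 => j _; exact: normr_ge0.
Qed.

Lemma opset_sup p r (M : 'M[R]_(p, r)) : has_sup (opset M).
Proof.
split; first by exists (vnorm (M *m 0)), 0 => //=; rewrite vnorm0 ler01.
by exists (Num.sqrt (\sum_(i < p) (\sum_i \sum_j `|M i j|) ^+ 2)) => _ [x hx <-]; exact: opbound.
Qed.

Lemma opnorm_ub p r (M : 'M[R]_(p, r)) (x : 'cV[R]_r) : vnorm x <= 1 -> vnorm (M *m x) <= opnorm M.
Proof. by move=> hx; rewrite /opnorm; apply: (sup_upper_bound (opset_sup M)); exists x. Qed.

Lemma opnorm_ge0 p r (M : 'M[R]_(p, r)) : 0 <= opnorm M.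
Proof. by rewrite -(vnorm0 p); rewrite -(mulmx0 _ M); apply: opnorm_ub; rewrite vnorm0 ler01. Qed.

Lemma opnorm_le p r (M : 'M[R]_(p, r)) c :
  (forall x, vnorm x <= 1 -> vnorm (M *m x) <= c) -> opnorm M <= c.
Proof.
move=> h; rewrite /opnorm; apply: ge_sup; first by exists (vnorm (M *m 0)), 0 => //=; rewrite vnorm0 ler01.
by move=> _ [x hx <-]; exact: h.
Qed.

Lemma opnorm_vec p r (M : 'M[R]_(p, r)) (x : 'cV[R]_r) : vnorm (M *m x) <= opnorm M * vnorm x.
Proof.
have [hx|hx] := eqVneq (vnorm x) 0.
  by rewrite hx mulr0 (vnorm_eq0 hx) mulmx0 vnorm0.
have hp : 0 < vnorm x by rewrite lt_def hx vnorm_ge0.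
have := opnorm_ub M (x := (vnorm x)^-1 *: x).
rewrite vnormZ ger0_norm ?invr_ge0 ?vnorm_ge0 // mulVf // lexx => /(_ isT).
by rewrite -scalemxAr vnormZ ger0_norm ?invr_ge0 ?vnorm_ge0 // ler_pdivrMl // mulrC.
Qed.

Lemma opnormD p r (M1 M2 : 'M[R]_(p, r)) : opnorm (M1 + M2) <= opnorm M1 + opnorm M2.
Proof.
apply: opnorm_le => x hx; rewrite mulmxDl; apply: le_trans (vnormD _ _) _.
by apply: lerD; apply: opnorm_ub.
Qed.

Lemma opnormN p r (M : 'M[R]_(p, r)) : opnorm (- M) <= opnorm M.
Proof. by apply: opnorm_le => x hx; rewrite mulNmx vnormN; apply: opnorm_ub. Qed.

Lemma opnormM p r s (M1 : 'M[R]_(p, r)) (M2 : 'M[R]_(r, s)) :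
  opnorm (M1 *m M2) <= opnorm M1 * opnorm M2.
Proof.
apply: opnorm_le => x hx; rewrite -mulmxA; apply: le_trans (opnorm_vec _ _) _.
apply: ler_wpM2l; first exact: opnorm_ge0.
apply: le_trans (opnorm_vec _ _) _; rewrite -[X in _ <= X]mulr1.
by apply: ler_wpM2l => //; exact: opnorm_ge0.
Qed.

Lemma opnorm_sum p r (I : Type) (s : seq I) (P : pred I) (F : I -> 'M[R]_(p, r)) :
  opnorm (\sum_(i <- s | P i) F i) <= \sum_(i <- s | P i) opnorm (F i).
Proof.
apply: (big_ind2 (fun A a => opnorm A <= a)).
- by apply: opnorm_le => x _; rewrite mul0mx vnorm0.
- by move=> A1 a1 A2 a2 h1 h2; apply: le_trans (opnormD _ _) _; apply: lerD.
- by [].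
Qed.

Lemma expand n (M Mh : nat -> 'M[R]_n) k1 d :
  prodL Mh k1 d = prodL M k1 d +
    \sum_(i < d) prodL M (k1 + i).+1 (d - i.+1) *m (Mh (k1 + i)%N - M (k1 + i)%N) *m prodL Mh k1 i.
Proof.
elim: d => [|d IH]; first by rewrite big_ord0 addr0.
rewrite big_ord_recr /= subnn /= mul1mx.
have -> : \sum_(i < d) prodL M (k1 + widen_ord (leqnSn d) i).+1 (d.+1 - (widen_ord (leqnSn d) i).+1)
    *m (Mh (k1 + widen_ord (leqnSn d) i)%N - M (k1 + widen_ord (leqnSn d) i)%N)
    *m prodL Mh k1 (widen_ord (leqnSn d) i)
  = M (k1 + d)%N *m \sum_(i < d) prodL M (k1 + i).+1 (d - i.+1) *m (Mh (k1 + i)%N - M (k1 + i)%N) *m prodL Mh k1 i.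
  rewrite mulmx_sumr; apply: eq_bigr => i _ /=.
  have hi := ltn_ord i.
  rewrite (_ : (d.+1 - i.+1 = (d - i.+1).+1)%N); last by lia.
  rewrite [prodL M _ (_.+1)]/= (_ : ((k1 + i).+1 + (d - i.+1) = k1 + d)%N); last by lia.
  by rewrite !mulmxA.
rewrite addrA -mulmxDr -IH.
by rewrite mulmxBl addrC subrK.
Qed.

Lemma tele (x y : R) e :
  (x - y) * \sum_(i < e) y ^+ (e - i.+1) * x ^+ i = x ^+ e - y ^+ e.
Proof.
rewrite subrXX; congr (_ * _).
rewrite (reindex_inj rev_ord_inj) /=; apply: eq_bigr => i _ /=.
have hi := ltn_ord i.
rewrite mulrC; congr (_ ^+ _ * _ ^+ _); lia.
Qed.
End VN.

Unset Implicit Arguments.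
Theorem lemma6 (R : realType) (n m q H N T : nat)
  (act : 'I_m -> 'I_q)
  (A Ahat : 'M[R]_n) (B Bhat : 'M[R]_(n, m))
  (Q Qf : 'I_T -> 'M[R]_n) (Rc : 'I_T -> 'M[R]_m)
  (l : nat) (nu : R)
  (t : 'I_T) (S : {set 'I_q})
  (eps zeta eta : R) :
  (* standing setting *)
  (0 < H)%N -> (0 < N)%N ->
  {homo act : i j / (i <= j)%N >-> (i <= j)%N} ->
  (forall s : 'I_T, psd (Q s) /\ psd (Qf s) /\ pd (Rc s)) ->
  (* Assumption 1 *)
  (forall s : 'I_T, pd (Qf s) /\ 1 <= sigma_min (Q s) /\ 1 <= sigma_min (Rc s)) ->
  (* Assumption 2 *)
  (1 <= l)%N -> (l <= n - 1)%N -> 0 < nu ->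
  (forall S' : {set 'I_q}, #|S'| = H ->
     nu <= sigma_min (ctrb A (selB act S' B) l)) ->
  (* the lemma *)
  #|S| = H ->
  0 < eps ->
  (forall k : nat, (k < N)%N ->
     opnorm (ricK A (selB act S B) (Q t) (Qf t) (selR act S (Rc t)) N k
             - ricK Ahat (selB act S Bhat) (Q t) (Qf t) (selR act S (Rc t)) N k)
     <= eps) ->
  1 <= zeta -> 0 < eta < 1 ->
  (forall k1 k2 : nat, (k1 <= k2)%N -> (k2 <= N)%N ->
     opnorm (Psi (fun k => A + selB act S B *m
                   ricK A (selB act S B) (Q t) (Qf t) (selR act S (Rc t)) N k) k2 k1)
     <= zeta * eta ^+ (k2 - k1)) ->
  eps <= (1 - eta) / (2 * opnorm (selB act S B) * zeta) ->
  forall k1 k2 : nat, (k1 <= k2)%N -> (k2 <= N)%N ->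
    opnorm (Psi (fun k => A + selB act S B *m
                  ricK Ahat (selB act S Bhat) (Q t) (Qf t) (selR act S (Rc t)) N k) k2 k1)
    <= zeta * ((1 + eta) / 2) ^+ (k2 - k1).
Proof.
move=> _ _ _ _ _ _ _ _ _ _ eps0 hK zeta1 /andP[eta0 eta1] hPsi heps k1 k2 hk12 hk2N.
set Bs := selB act S B.
set K := ricK A Bs (Q t) (Qf t) (selR act S (Rc t)) N.
set Kh := ricK Ahat (selB act S Bhat) (Q t) (Qf t) (selR act S (Rc t)) N.
set rho := (1 + eta) / 2.
pose Mf := fun k => A + Bs *m K k.
pose Mh := fun k => A + Bs *m Kh k.
have hb0 := opnorm_ge0 Bs.
pose delta := opnorm Bs * eps.
have hD : forall k, (k < N)%N -> opnorm (Mh k - Mf k) <= delta.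
  move=> k hk; rewrite /Mh /Mf opprD addrACA subrr add0r -mulmxBr.
  apply: le_trans (opnormM _ _) _; apply: ler_wpM2l => //.
  rewrite -opprB; apply: le_trans (opnormN _) _; exact: hK.
have hzd : zeta * delta <= rho - eta.
  rewrite /delta /rho.
  have [hb|hb] := eqVneq (opnorm Bs) 0.
    rewrite hb mul0r mulr0; lra.
  have hbp : 0 < opnorm Bs by rewrite lt_def hb hb0.
  have hp : 0 < 2 * opnorm Bs * zeta by apply: mulr_gt0 => //; [apply: mulr_gt0 => //| lra].
  move: heps; rewrite ler_pdivlMr // => heps.
  nra.
have hrho : eta <= rho by rewrite /rho; lra.
have main : forall d e, (e <= d)%N -> (k1 + e <= N)%N -> opnorm (prodL Mh k1 e) <= zeta * rho ^+ e.
  elim=> [|d IH] e hed heN.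
    move: hed; rewrite leqn0 => /eqP ->.
    apply: opnorm_le => x hx; rewrite /= mul1mx expr0 mulr1.
    by apply: le_trans hx _.
  rewrite (expand Mf); apply: le_trans (opnormD _ _) _.
  have h1 : opnorm (prodL Mf k1 e) <= zeta * eta ^+ e.
    have := hPsi k1 (k1 + e)%N (leq_addr _ _) heN.
    by rewrite /Psi addKn.
  have h2 : opnorm (\sum_(i < e) prodL Mf (k1 + i).+1 (e - i.+1) *m (Mh (k1 + i)%N - Mf (k1 + i)%N) *m prodL Mh k1 i)
      <= \sum_(i < e) zeta * (zeta * delta) * (eta ^+ (e - i.+1) * rho ^+ i).
    apply: le_trans (opnorm_sum _ _ _) _; apply: ler_sum => i _.
    have hi := ltn_ord i.
    apply: le_trans (opnormM _ _) _.
    have -> : zeta * (zeta * delta) * (eta ^+ (e - i.+1) * rho ^+ i)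
       = (zeta * eta ^+ (e - i.+1) * delta) * (zeta * rho ^+ i) by ring.
    apply: ler_pM; [apply: opnorm_ge0 | apply: opnorm_ge0 | |].
      apply: le_trans (opnormM _ _) _.
      apply: ler_pM; [apply: opnorm_ge0 | apply: opnorm_ge0 | |].
        have := hPsi (k1 + i).+1 (k1 + e)%N _ heN.
        rewrite /Psi (_ : (k1 + e - (k1 + i).+1 = e - i.+1)%N); last by lia.
        by apply; lia.
      by apply: hD; lia.
    by apply: IH; lia.
  apply: le_trans (lerD h1 h2) _.
  rewrite -mulr_sumr.
  have hs : 0 <= \sum_(i < e) eta ^+ (e - i.+1) * rho ^+ i.
    apply: sumr_ge0 => i _; apply: mulr_ge0; apply: exprn_ge0; lra.
  have ht := tele rho eta e.
  have hz0 : 0 <= zeta by lra.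
  have : zeta * (zeta * delta) * (\sum_(i < e) eta ^+ (e - i.+1) * rho ^+ i)
       <= zeta * (rho - eta) * (\sum_(i < e) eta ^+ (e - i.+1) * rho ^+ i).
    by apply: ler_wpM2r => //; apply: ler_wpM2l.
  have e1 : zeta * (rho - eta) * (\sum_(i < e) eta ^+ (e - i.+1) * rho ^+ i)
     = zeta * (rho ^+ e - eta ^+ e) by rewrite -mulrA ht.
  rewrite e1 => h; lra.
have := main (k2 - k1)%N (k2 - k1)%N (leqnn _) _.
rewrite subnKC //; apply; exact: hk2N.
Qed.
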